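(* Let $d\ge 2$ and let ${\cal P}=\{\Pi_i,\frac{1}{d^2}\}_{i=1}^{d^2}$ be a SIC ensemble on $\mathbb{C}^d$, i.e. $\Pi_i=|\psi_i\rangle\langle\psi_i|$ for unit vectors $\psi_i$ with $|\langle\psi_i|\psi_j\rangle|^2=\frac{1}{d+1}$ for all $i\ne j$, each with probability $1/d^2$. Let ${\cal G}=\{G_b\}$ be any (finite) POVM on $\mathbb{C}^d$ consisting of rank-one elements $G_b=g_b|\phi_b\rangle\langle\phi_b|\equiv g_b\sigma_b$ ($g_b>0$, $\|\phi_b\|=1$), and let ${\cal M}$ be the reproduction strategy $b\mapsto\sigma_b$. Then $$F_{\cal P}({\cal G},{\cal M})=\frac{2}{d+1}=F_{\cal P},$$ i.e. this simple strategy achieves the accessible fidelity.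
   Context: For a POVM ${\cal E}=\{E_b\}$ and a state-reproduction strategy ${\cal M}:b\mapsto\sigma_b$ (density operators), the average fidelity is $F_{\cal P}({\cal E},{\cal M})=\sum_{b,i}\pi_i\,{\rm tr}(\Pi_iE_b)\,{\rm tr}(\Pi_i\sigma_b)$ (here $\pi_i=1/d^2$). The accessible fidelity is $F_{\cal P}=\sup_{{\cal E},{\cal M}}F_{\cal P}({\cal E},{\cal M})$ over all POVMs and reproduction strategies. *)

(* Defs.v *)
From HB Require Import structures.
From mathcomp Require Import all_boot all_order all_algebra.
From mathcomp Require Import complex.
From mathcomp Require Import classical_sets boolp reals.
Set Implicit Arguments. Unset Strict Implicit. Unset Printing Implicit Defensive.
Import Order.TTheory GRing.Theory Num.Theory.
Local Open Scope ring_scope.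
Local Open Scope classical_set_scope.

Definition adj (R : rcfType) m n (A : 'M[R[i]]_(m, n)) : 'M[R[i]]_(n, m) :=
  (map_mx conjc A)^T.

Definition braket (R : rcfType) d (u v : 'cV[R[i]]_d) : R[i] := (adj u *m v) 0 0.

Definition ketbra (R : rcfType) d (psi : 'cV[R[i]]_d) : 'M[R[i]]_d := psi *m adj psi.

Definition psd (R : rcfType) d (A : 'M[R[i]]_d) : Prop :=
  adj A = A /\ forall v : 'cV[R[i]]_d, 0 <= (adj v *m A *m v) 0 0.

Definition density (R : rcfType) d (A : 'M[R[i]]_d) : Prop :=
  psd A /\ \tr A = 1.

Definition povm (R : rcfType) d (B : finType) (E : B -> 'M[R[i]]_d) : Prop :=
  (forall b, psd (E b)) /\ \sum_(b : B) E b = 1%:M.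

Definition strategy (R : rcfType) d (B : finType) (M : B -> 'M[R[i]]_d) : Prop :=
  forall b, density (M b).

Definition avg_fidelity (R : rcfType) d (I : finType) (pi : I -> R)
  (Pi : I -> 'M[R[i]]_d) (B : finType) (E M : B -> 'M[R[i]]_d) : R :=
  @complex.Re R (\sum_(b : B) \sum_(i : I)
        real_complex R (pi i) * \tr (Pi i *m E b) * \tr (Pi i *m M b)).

Definition accessible_fidelity (R : realType) d (I : finType) (pi : I -> R)
  (Pi : I -> 'M[R[i]]_d) : R :=
  sup [set r : R | exists (B : finType) (E M : B -> 'M[R[i]]_d),
         povm E /\ strategy M /\ r = avg_fidelity pi Pi E M].

Definition SIC (R : rcfType) d (psi : 'I_(d ^ 2) -> 'cV[R[i]]_d) : Prop :=
  (forall i, braket (psi i) (psi i) = 1) /\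
  (forall i j, i != j -> `|braket (psi i) (psi j)| ^+ 2 = (d.+1%:R)^-1).

(* Main.v *)
Require Import Defs.
From HB Require Import structures.
From mathcomp Require Import all_boot all_order all_algebra.
From mathcomp Require Import complex.
From mathcomp Require Import classical_sets boolp reals.
Import Order.TTheory GRing.Theory Num.Theory.
Local Open Scope ring_scope.
Local Open Scope complex_scope.

Section S.
Variable R : rcfType.
Local Notation C := (R[i]).

Lemma adjE m n (A : 'M[C]_(m,n)) i j : adj A i j = (A j i)^*.
Proof. by rewrite /adj !mxE. Qed.

Lemma adjM m n p (A : 'M[C]_(m,n)) (B : 'M[C]_(n,p)) : adj (A *m B) = adj B *m adj A.
Proof. by rewrite /adj map_mxM trmx_mul. Qed.

Lemma adjK m n (A : 'M[C]_(m,n)) : adj (adj A) = A.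
Proof. by apply/matrixP=> i j; rewrite !adjE conjcK. Qed.

Lemma tr1 (A : 'M[C]_1) : \tr A = A 0 0.
Proof. by rewrite /mxtrace big_ord1. Qed.

Lemma mul11 m (A : 'M[C]_(1,m)) (B : 'M[C]_(m,1)) : (A *m B) 0 0 = \sum_k A 0 k * B k 0.
Proof. by rewrite mxE. Qed.

Lemma braketC d (u v : 'cV[C]_d) : braket v u = (braket u v)^*.
Proof.
rewrite /braket !mxE rmorph_sum; apply: eq_bigr => k _.
by rewrite !mxE rmorphM /= conjcK mulrC.
Qed.

Lemma tr_ketbra d (u : 'cV[C]_d) : \tr (ketbra u) = braket u u.
Proof. by rewrite /ketbra mxtrace_mulC tr1. Qed.

Lemma tr_ketbra2 d (u v : 'cV[C]_d) :
  \tr (ketbra u *m ketbra v) = braket u v * braket v u.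
Proof.
rewrite /ketbra /braket mulmxA mxtrace_mulC !mulmxA tr1.
by rewrite -mulmxA [LHS]mxE big_ord1 mulrC.
Qed.

Lemma mulconj (z : C) : z * z^* = ((complex.Re z)^+2 + (complex.Im z)^+2)%:C.
Proof. by case: z => a b; simpc; rewrite /= !expr2 [b * a]mulrC addNr. Qed.

End S.
From mathcomp Require Import ring lra.

Lemma normsq (R : rcfType) (z : R[i]) : z * z^* = `|z| ^+ 2.
Proof. by rewrite mulconj add_Re2_Im2. Qed.

Lemma natS_neq0 (R : rcfType) n : (n.+1%:R : R[i]) != 0.
Proof. by rewrite pnatr_eq0. Qed.

Section SIC.
Variable R : rcfType.
Local Notation C := (R[i]).
Variable d : nat.
Variable psi : 'I_(d ^ 2) -> 'cV[C]_d.
Hypothesis hsic : SIC psi.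
Local Notation Pi := (fun i => ketbra (psi i)).
Local Notation kap := ((d.+1%:R : C)^-1).

Lemma trPi i : \tr (Pi i) = 1.
Proof. by rewrite tr_ketbra hsic.1. Qed.

Lemma trPiPi i j : \tr (Pi i *m Pi j) = if i == j then 1 else kap.
Proof.
rewrite tr_ketbra2; case: eqVneq => [->|hij]; first by rewrite hsic.1 mulr1.
by rewrite (@braketC _ _ (psi i) (psi j)) normsq hsic.2.
Qed.

Lemma trPiX (c : 'I_(d ^ 2) -> C) i :
  d.+1%:R * \tr (Pi i *m \sum_j c j *: Pi j) = d%:R * c i + \sum_j c j.
Proof.
rewrite mulmx_sumr raddf_sum /= (bigD1 i) //= [in RHS](bigD1 i) //=.
rewrite -scalemxAr mxtraceZ trPiPi eqxx mulr1.
rewrite (eq_bigr (fun j => c j * kap)); last first.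
  by move=> j hj; rewrite -scalemxAr mxtraceZ trPiPi eq_sym (negbTE hj).
rewrite -mulr_suml.
have h := natS_neq0 R d.
set S := (\sum_(_ < _ | _) _).
by rewrite mulrDr mulrCA mulfV // mulr1 -natr1 mulrDl mul1r addrA.
Qed.

Hypothesis hd : (0 < d)%N.

Lemma Pi_indep (c : 'I_(d ^ 2) -> C) : \sum_j c j *: Pi j = 0 -> forall i, c i = 0.
Proof.
move=> h0.
have hd' : (d == 0)%N = false by apply: negbTE; rewrite -lt0n.
have e i : d%:R * c i + \sum_j c j = 0.
  by rewrite -trPiX h0 mulmx0 linear0 mulr0.
have hS : \sum_j c j = 0.
  have : \sum_(i < d ^ 2) (d%:R * c i + \sum_j c j) = 0.
    by rewrite big1 // => i _; rewrite e.
  rewrite big_split /= -mulr_sumr sumr_const card_ord -[(\sum_j c j) *+ _]mulr_natl -mulrDl.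
  move/eqP; rewrite mulf_eq0 => /orP [|/eqP //].
  by rewrite -natrD pnatr_eq0 addn_eq0 hd'.
move=> i; have := e i; rewrite hS addr0 => /eqP; rewrite mulf_eq0 pnatr_eq0.
by rewrite hd' /= => /eqP.
Qed.

Definition PiM : 'M[C]_(d ^ 2) := \matrix_(j, k) (mxvec (Pi j) 0 k).

Lemma PiM_mul (v : 'rV[C]_(d ^ 2)) : v *m PiM = mxvec (\sum_j v 0 j *: Pi j).
Proof.
apply/rowP => k; rewrite !mxE raddf_sum summxE /=.
by apply: eq_bigr => j _; rewrite linearZ /= !mxE.
Qed.

Lemma Pi_span (X : 'M[C]_d) : exists c : 'I_(d ^ 2) -> C, X = \sum_j c j *: Pi j.
Proof.
have hu : PiM \in unitmx.
  rewrite -row_free_unit; apply: inj_row_free => v.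
  rewrite PiM_mul => /eqP; rewrite mxvec_eq0 => /eqP /Pi_indep h.
  by apply/rowP => j; rewrite h mxE.
exists (fun j => (mxvec X *m invmx PiM) 0 j).
apply: (can_inj mxvecK); rewrite -PiM_mul.
by rewrite mulmxKV.
Qed.


Lemma tr_comb (c : 'I_(d ^ 2) -> C) : \tr (\sum_j c j *: Pi j) = \sum_j c j.
Proof. by rewrite raddf_sum /=; apply: eq_bigr => j _; rewrite mxtraceZ trPi mulr1. Qed.

Lemma sum_trPi (X : 'M[C]_d) : \sum_i \tr (Pi i *m X) = d%:R * \tr X.
Proof.
have [c ->] := Pi_span X.
apply: (mulfI (natS_neq0 R d)); rewrite mulr_sumr.
under eq_bigr do rewrite trPiX.
rewrite big_split /= sumr_const card_ord tr_comb.
rewrite -mulr_sumr -[(\sum_j c j) *+ _]mulr_natl natrX -natr1. ring.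
Qed.

Lemma sum_trtr (X Y : 'M[C]_d) :
  d.+1%:R * \sum_i \tr (Pi i *m X) * \tr (Pi i *m Y) =
  d%:R * (\tr (X *m Y) + \tr X * \tr Y).
Proof.
have [c hY] := Pi_span Y.
have eY i : d.+1%:R * \tr (Pi i *m Y) = d%:R * c i + \sum_j c j.
  by rewrite hY trPiX.
have hB : \sum_i c i * \tr (Pi i *m X) = \tr (X *m Y).
  rewrite mxtrace_mulC hY mulmx_suml raddf_sum /=; apply: eq_bigr => i _.
  by rewrite -scalemxAl mxtraceZ.
have tY : \tr Y = \sum_j c j by rewrite hY tr_comb.
rewrite mulr_sumr.
under eq_bigr do rewrite mulrCA eY mulrDr.
rewrite big_split /= -mulr_suml sum_trPi tY.
rewrite (eq_bigr (fun i => d%:R * (c i * \tr (Pi i *m X)))); last first.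
  by move=> i _; rewrite mulrCA [c i * _]mulrC.
rewrite -mulr_sumr hB mulrDr mulrA.
by rewrite [_ * \sum_j c j]mulrC.
Qed.
End SIC.

Section PSD.
Variable R : rcfType.
Local Notation C := (R[i]).
Variable n : nat.

Lemma ReD (x y : C) : complex.Re (x + y) = complex.Re x + complex.Re y.
Proof. by case: x; case: y. Qed.

Lemma Re_sum (I : Type) (r : seq I) (P : pred I) (F : I -> C) :
  complex.Re (\sum_(i <- r | P i) F i) = \sum_(i <- r | P i) complex.Re (F i).
Proof. by apply: (big_morph _ ReD). Qed.

Lemma sum1 (f : 'I_n -> C) j : (forall q, q != j -> f q = 0) -> \sum_q f q = f j.
Proof. by move=> h; rewrite (bigD1 j) //= big1 ?addr0. Qed.

Lemma sum2 (f : 'I_n -> C) j k : j != k ->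
  (forall q, q != j -> q != k -> f q = 0) -> \sum_q f q = f j + f k.
Proof.
move=> hjk h; rewrite (bigD1 j) //= (bigD1 k) 1?eq_sym //= big1 ?addr0 //.
by move=> q /andP [hqk hqj]; apply: h.
Qed.

Lemma quadE (A : 'M[C]_n) (v : 'cV[C]_n) :
  (adj v *m A *m v) 0 0 = \sum_q (\sum_p (v p 0)^* * A p q) * v q 0.
Proof. by rewrite mxE; apply: eq_bigr => q _; rewrite mxE; congr (_ * _); apply: eq_bigr => p _; rewrite adjE. Qed.

Lemma psd_diag (A : 'M[C]_n) j : psd A -> A j j = (complex.Re (A j j))%:C /\ 0 <= complex.Re (A j j).
Proof.
case=> _ hA; have := hA (\col_p (if p == j then 1 else 0)).
rewrite quadE (@sum1 _ j); last by move=> q hq; rewrite mxE (negbTE hq) mulr0.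
rewrite (@sum1 _ j); last first.
  by move=> q hq; rewrite mxE (negbTE hq); apply/eqP; rewrite mulf_eq0 conjc_eq0 eqxx.
rewrite !mxE eqxx conjC1 mul1r mulr1 lecE => /andP [/eqP him hre].
by split => //; case: (A j j) him => a b /= ->.
Qed.

Lemma psd_herm (A : 'M[C]_n) j k : psd A -> A k j = (A j k)^*.
Proof. by case=> hA _; rewrite -[in LHS]hA adjE. Qed.


Lemma psd_quad (A : 'M[C]_n) j k (x y : C) : psd A -> j != k ->
  0 <= (x^* * A j j + y^* * A k j) * x + (x^* * A j k + y^* * A k k) * y.
Proof.
move=> hA hjk; have := hA.2 (\col_p (if p == j then x else if p == k then y else 0)).
have hkj : (k == j) = false by rewrite eq_sym (negbTE hjk).
rewrite quadE (@sum2 _ j k) //; last first.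
  by move=> q hq1 hq2; rewrite mxE (negbTE hq1) (negbTE hq2) mulr0.
rewrite (@sum2 _ j k) // ?(@sum2 _ j k) //; last first.
- by move=> q hq1 hq2; rewrite mxE (negbTE hq1) (negbTE hq2); apply/eqP; rewrite mulf_eq0 conjC_eq0 eqxx.
- by move=> q hq1 hq2; rewrite mxE (negbTE hq1) (negbTE hq2); apply/eqP; rewrite mulf_eq0 conjC_eq0 eqxx.
by rewrite !mxE eqxx hkj eqxx.
Qed.

Lemma psd_minor (A : 'M[C]_n) j k : psd A -> j != k ->
  (complex.Re (A j k))^+2 + (complex.Im (A j k))^+2 <=
  complex.Re (A j j) * complex.Re (A k k).
Proof.
move=> hA hjk.
have [ej hj] := psd_diag A j hA; have [ek hk] := psd_diag A k hA.
have Q t r := psd_quad A j k (t%:C) (- (r%:C * (A j k)^*)) hA hjk.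
move: Q; rewrite (psd_herm A j k hA) ej ek.
move: (complex.Re (A j j)) (complex.Re (A k k)) hj hk => a b ha hb.
case: (A j k) => p q /= Q.
have H t r : 0 <= t^+2 * a - 2 * t * r * (p^+2+q^+2) + r^+2 * (p^+2+q^+2) * b.
  have := Q t r; rewrite lecE => /andP [_].
  have cE (z : C) : z^* = conjc z by [].
  rewrite /=; simpc => h; apply: le_trans h _; rewrite le_eqVlt; apply/orP; left; apply/eqP; ring.
set m := p^+2 + q^+2.
have hm : 0 <= m by rewrite /m; nra.
have [a0|apos] := eqVneq a 0.
  have := H (b + 1) 1; rewrite a0 mul0r -/m => h.
  have e : (b + 1) ^+ 2 * 0 - 2 * (b + 1) * 1 * m + 1 ^+ 2 * m * b = - (m * (b+2)) by ring.
  rewrite e oppr_ge0 in h.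
  have : 0 <= m * b by rewrite mulr_ge0.
  lra.
have apos' : 0 < a by rewrite lt_def apos ha.
have := H m a.
have e : m ^+ 2 * a - 2 * m * a * m + a ^+ 2 * m * b = (a * m) * (a * b - m) by ring.
rewrite e.
have [m0|mpos] := eqVneq m 0; first by move=> _; rewrite m0 mulr_ge0.
have am : 0 < a * m by rewrite mulr_gt0 // lt_def mpos hm.
by rewrite pmulr_rge0 // subr_ge0.
Qed.

Lemma cs_bound (aj ak bj bk p q r s : R) : 0 <= aj -> 0 <= ak -> 0 <= bj -> 0 <= bk ->
  p^+2 + q^+2 <= aj * ak -> r^+2 + s^+2 <= bj * bk ->
  2 * (p * r - q * s) <= aj * bk + ak * bj.
Proof.
move=> h1 h2 h3 h4 hA hB.
set m := p * r - q * s.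
have hP : 0 <= aj * bk + ak * bj by rewrite addr_ge0 // mulr_ge0.
have [mle|mgt] := lerP m 0; first by lra.
have e1 : m ^+ 2 <= (p^+2 + q^+2) * (r^+2 + s^+2).
  have -> : (p^+2 + q^+2) * (r^+2 + s^+2) = m ^+ 2 + (p * s + q * r) ^+ 2 by rewrite /m; ring.
  by rewrite lerDl sqr_ge0.
have e2 : (p^+2 + q^+2) * (r^+2 + s^+2) <= (aj * ak) * (bj * bk).
  by apply: ler_pM => //; rewrite addr_ge0 // sqr_ge0.
have e3 : 4 * ((aj * ak) * (bj * bk)) <= (aj * bk + ak * bj) ^+ 2.
  have -> : (aj * bk + ak * bj) ^+ 2 = 4 * ((aj * ak) * (bj * bk)) + (aj * bk - ak * bj) ^+ 2 by ring.
  by rewrite lerDl sqr_ge0.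
have e4 : (2 * m) ^+ 2 <= (aj * bk + ak * bj) ^+ 2.
  apply: le_trans e3; rewrite exprMn; have -> : (2 : R) ^+ 2 = 4 by rewrite expr2; lra.
  by rewrite ler_pM2l; [apply: le_trans e2|lra].
move: e4; rewrite ler_sqr ?nnegrE //; lra.
Qed.

Lemma psd_tr_le (A B : 'M[C]_n) : psd A -> psd B ->
  complex.Re (\tr (A *m B)) <= complex.Re (\tr A) * complex.Re (\tr B).
Proof.
move=> hA hB.
set a := fun j => complex.Re (A j j).
set b := fun j => complex.Re (B j j).
have -> : complex.Re (\tr A) * complex.Re (\tr B) =
    \sum_j \sum_k (a j * b k + a k * b j) / 2.
  have dl (f g : 'I_n -> R) : \sum_j \sum_k f j * g k = (\sum_j f j) * (\sum_k g k).
    by rewrite mulr_suml; apply: eq_bigr => j _; rewrite mulr_sumr.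
  rewrite /mxtrace !Re_sum -/a -/b.
  have -> : \sum_j \sum_k (a j * b k + a k * b j) / 2 =
     ((\sum_j \sum_k a j * b k) + (\sum_j \sum_k b j * a k)) / 2.
    rewrite -big_split mulr_suml; apply: eq_bigr => j _.
    rewrite -big_split mulr_suml; apply: eq_bigr => k _.
    by rewrite [b j * a k]mulrC.
  rewrite !dl [(\sum_j b j) * _]mulrC; by field.
rewrite /mxtrace Re_sum; apply: ler_sum => j _.
rewrite mxE Re_sum; apply: ler_sum => k _.
have [<-|hjk] := eqVneq j k.
  case: (psd_diag A j hA) => -> _; case: (psd_diag B j hB) => -> _.
  rewrite -rmorphM /= /a /b le_eqVlt; apply/orP; left; apply/eqP; by field.
have mA := psd_minor A j k hA hjk.
have mB := psd_minor B k j hB (negbT (introF eqP (fun e => (negP hjk) (introT eqP (esym e))))).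
have [_ ha1] := psd_diag A j hA; have [_ ha2] := psd_diag A k hA.
have [_ hb1] := psd_diag B j hB; have [_ hb2] := psd_diag B k hB.
move: mA mB; rewrite /a /b.
case: (A j k) => p q; case: (B k j) => r s /= mA mB.
rewrite mulrC in mB.
have := @cs_bound _ _ _ _ _ _ _ _ ha1 ha2 hb1 hb2 mA mB.
simpc. lra.
Qed.

End PSD.

Lemma natC (R : rcfType) n : ((n%:R : R)%:C : R[i]) = n%:R.
Proof.
elim: n => [|n IH]; first by [].
by rewrite !mulrS -IH; apply/eqP; rewrite eq_complex /= addr0 !eqxx.
Qed.

Lemma realCM (R : rcfType) (x y : R) : (x * y)%:C = x%:C * y%:C.
Proof. by apply/eqP; rewrite eq_complex /= !mulr0 mul0r subr0 addr0 !eqxx. Qed.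

Lemma realCV (R : rcfType) (x : R) : (x^-1)%:C = (x%:C)^-1.
Proof.
have [->|hx] := eqVneq x 0; first by rewrite invr0 invr0.
apply: (mulfI (_ : x%:C != 0)); first by apply/eqP => -[]; apply/eqP.
by rewrite -realCM !mulfV //; apply/eqP => -[]; apply/eqP.
Qed.

Lemma ReCM (R : rcfType) (x : R) (z : R[i]) : complex.Re (x%:C * z) = x * complex.Re z.
Proof. by case: z => a b; simpc. Qed.

Lemma ReC (R : rcfType) (x : R) : complex.Re (x%:C) = x.
Proof. by []. Qed.

Lemma ket_density (R : rcfType) d (phi : 'cV[R[i]]_d) : braket phi phi = 1 -> density (ketbra phi).
Proof.
move=> h; split; last by rewrite tr_ketbra.
split; first by rewrite /ketbra adjM adjK.
move=> v; rewrite /ketbra !mulmxA -mulmxA.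
rewrite mxE big_ord1.
have -> : (adj v *m phi) 0 0 = (braket phi v)^* by rewrite -braketC.
rewrite mulrC; exact: mulcJ_ge0.
Qed.

Lemma fid_formula (R : rcfType) d (psi : 'I_(d ^ 2) -> 'cV[R[i]]_d) (hsic : SIC psi)
  (hd : (0 < d)%N) (B : finType) (E M : B -> 'M[R[i]]_d) :
  povm E -> strategy M ->
  avg_fidelity (fun _ => (d ^ 2)%:R^-1 : R) (fun i => ketbra (psi i)) E M =
  (complex.Re (\sum_b \tr (E b *m M b)) + d%:R) / (d%:R * d.+1%:R).
Proof.
move=> [_ hE] hM.
have hd0 : (d%:R : R) != 0 by rewrite pnatr_eq0 -lt0n.
have hd1 : (d.+1%:R : R) != 0 by rewrite pnatr_eq0.
set k : R := (d ^ 2)%:R^-1 * d%:R / d.+1%:R.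
have hb b : \sum_i ((d ^ 2)%:R^-1 : R)%:C * \tr (ketbra (psi i) *m E b) * \tr (ketbra (psi i) *m M b)
     = k%:C * (\tr (E b *m M b) + \tr (E b)).
  have h1 := @sum_trtr R d psi hsic hd (E b) (M b).
  rewrite (hM b).2 mulr1 in h1.
  have -> : k%:C = ((d ^ 2)%:R^-1 : R)%:C * (d%:R / d.+1%:R).
    rewrite /k !realCM !realCV -mulrA; congr (_ * (_ * _)); [exact: natC | congr (_^-1); exact: natC].
  have h2 : \sum_i \tr (ketbra (psi i) *m E b) * \tr (ketbra (psi i) *m M b)
     = d%:R / d.+1%:R * (\tr (E b *m M b) + \tr (E b)).
    apply: (mulfI (natS_neq0 R d)).
    by rewrite h1 mulrA mulrCA mulfV ?natS_neq0 // mulr1.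
  under eq_bigr do rewrite -mulrA.
  by rewrite -mulr_sumr h2 mulrA.
rewrite /avg_fidelity (eq_bigr _ (fun b _ => hb b)) -mulr_sumr ReCM big_split /=.
have tE : \tr (\sum_b E b) = \sum_b \tr (E b) by rewrite raddf_sum.
rewrite -tE hE mxtrace1 ReD.
have -> : complex.Re (d%:R : R[i]) = d%:R by rewrite -(rmorph_nat (real_complex R)).
rewrite /k natrX; field.
by rewrite hd0 addrC natr1 hd1.
Qed.

Lemma trG (R : rcfType) d (c : R) (phi : 'cV[R[i]]_d) : braket phi phi = 1 ->
  \tr ((c%:C *: ketbra phi) *m ketbra phi) = c%:C /\ \tr (c%:C *: ketbra phi) = c%:C.
Proof.
move=> h; split; first by rewrite -scalemxAl mxtraceZ tr_ketbra2 h mulr1 mulr1.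
by rewrite mxtraceZ tr_ketbra h mulr1.
Qed.

Local Close Scope complex_scope.

Theorem theorem4 (R : realType) (d : nat) (hd : (2 <= d)%N)
  (psi : 'I_(d ^ 2) -> 'cV[R[i]]_d) (hsic : SIC psi)
  (B : finType) (g : B -> R) (phi : B -> 'cV[R[i]]_d)
  (hg : forall b, 0 < g b)
  (hphi : forall b, braket (phi b) (phi b) = 1)
  (hG : povm (fun b => real_complex R (g b) *: ketbra (phi b))) :
  let pi := fun _ : 'I_(d ^ 2) => (d ^ 2)%:R^-1 : R in
  let Pi := fun i => ketbra (psi i) in
  avg_fidelity pi Pi (fun b => real_complex R (g b) *: ketbra (phi b))
    (fun b => ketbra (phi b)) = 2 / d.+1%:R /\
  accessible_fidelity pi Pi = 2 / d.+1%:R.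
Proof.
move=> pi Pi.
have hd' : (0 < d)%N by apply: leq_trans hd.
have hd0 : (d%:R : R) != 0 by rewrite pnatr_eq0 -lt0n.
have hd1 : (d.+1%:R : R) != 0 by rewrite pnatr_eq0.
have hdp : (0 : R) < d%:R * d.+1%:R by rewrite mulr_gt0 // ltr0n.
have hM : strategy (fun b => ketbra (phi b)) := fun b => @ket_density _ _ _ (hphi b).
have Red : complex.Re (d%:R : R[i]) = d%:R by rewrite -natC.
have fin : (d%:R + d%:R) / (d%:R * d.+1%:R) = 2 / d.+1%:R :> R.
  by field; rewrite hd0 addrC natr1 hd1.
have F1 : avg_fidelity pi Pi (fun b => real_complex R (g b) *: ketbra (phi b))
    (fun b => ketbra (phi b)) = 2 / d.+1%:R.
  rewrite /pi /Pi fid_formula //.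
  have -> : \sum_b \tr (real_complex R (g b) *: ketbra (phi b) *m ketbra (phi b)) =
            \tr (\sum_b real_complex R (g b) *: ketbra (phi b)).
    rewrite raddf_sum /=; apply: eq_bigr => b _.
    by have [-> ->] := @trG _ _ (g b) _ (hphi b).
  by rewrite hG.2 mxtrace1 Red.
split => //.
rewrite /accessible_fidelity.
set S := [set r : R | _]%classic.
have ub : ubound S (2 / d.+1%:R).
  move=> r [B' [E [M [hE [hM' ->]]]]].
  rewrite fid_formula // -fin ler_pM2r ?invr_gt0 // lerD2r.
  rewrite Re_sum.
  apply: le_trans (_ : \sum_b complex.Re (\tr (E b)) * complex.Re (\tr (M b)) <= _).
    by apply: ler_sum => b _; apply: psd_tr_le; [exact: hE.1 | exact: (hM' b).1].
  under eq_bigr => b _ do rewrite (hM' b).2 mulr1.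
  have tE : \tr (\sum_b E b) = \sum_b \tr (E b) by rewrite raddf_sum.
  by rewrite -Re_sum -tE hE.2 mxtrace1 Red.
have mem : S (2 / d.+1%:R).
  by exists B, (fun b => real_complex R (g b) *: ketbra (phi b)), (fun b => ketbra (phi b)).
apply/eqP; rewrite eq_le; apply/andP; split.
  by apply: ge_sup => //; exists (2 / d.+1%:R).
apply: sup_upper_bound => //; split; first by exists (2 / d.+1%:R).
by exists (2 / d.+1%:R).
Qed.
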